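(* Let $a,b,c,x\in X$ with $a\ge b$, $a\neq b$, $x\ge c$, $x\ne c$. Then: (1) $\tau_{a,b}\,c_{x,\{c\}}\,\tau_{a,b}^{-1}\in K_{\{a,b,c,x\}}$; (2) for any $Y\subset X$ such that the partial conjugation $c_{x,Y}$ is defined, $\tau_{a,b}c_{x,Y}\tau_{a,b}^{-1}$ is a product of elements of $K_{\{a,b,x\}}$ and partial conjugations of the form $c_{z,Y'}$ with $z\in\{a,x\}$ and $Y'\subset Y\cup\{x,a\}$; (3) if $c_x$ denotes conjugation by $x$, then $\tau_{a,b}c_x\tau_{a,b}^{-1}\in K_{\{a,b,x\}}$.
   Context: $\Gamma$ is a finite simplicial graph with vertex set $X$, $A_\Gamma$ its right-angled Artin group ($x,y\in X$ commute iff adjacent). $L=X\cup X^{-1}$; for $u\in L$, $\bar u\in X$ is the vertex with $u\in\{\bar u,\bar u^{-1}\}$. $\mathrm{lk}(v)$ is the set of neighbours of $v$, $\mathrm{st}(v)=\mathrm{lk}(v)\cup\{v\}$. Domination: for $v,w\in X$, $v\ge w$ iff $\mathrm{lk}(w)\subset\mathrm{st}(v)$; for letters $u,u'\in L$, $u\ge u'$ iff $\bar u\ge\bar u'$. For $u,v\in L$ with $u\ge v$, $\bar u\ne\bar v$, the transvection $\tau_{u,v}$ is the automorphism sending $v\mapsto vu$ and fixing all generators other than $\bar v$. For $u\in L$ and $Y$ a union of connected components of $\Gamma-\mathrm{st}(\bar u)$, the partial conjugation $c_{u,Y}$ sends $y\mapsto u^{-1}yu$ for $y\in Y$ and fixes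 the other generators. For $u\ge v$, $\bar u\neq \bar v$, we write $c_{u,\{v\}}$ for the automorphism sending $v\mapsto u^{-1}vu$ and fixing all other generators (a one-term partial conjugation). For $x,y,c\in L$ with $x,y\ge c$ and $\bar x,\bar y,\bar c$ distinct, $\tau_{[x,y],c}$ is the automorphism sending $c\mapsto c[x,y]$ and fixing all generators other than $\bar c$. For $Z\subset X$, $K_Z\le\mathrm{Aut}\,A_\Gamma$ is the subgroup generated by all $\tau_{[x,y],c}$ and all $c_{x,\{c\}}$ with $x,y,c\in Z$ (pairwise distinct where required) and $x,y\ge c$, together with all inner automorphisms of $A_\Gamma$. *)

(* Defs.v *)
From mathcomp Require Import all_boot.
Set Implicit Arguments. Unset Strict Implicit. Unset Printing Implicit Defensive.

Section RAAG.
Variable T : finType.          (* vertex set X of Gamma *)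
Variable adj : rel T.

(* A letter (v, false) is the generator v, (v, true) is v^{-1}. *)
Definition letter := (T * bool)%type.
Definition word := seq letter.

Definition inv_letter (l : letter) : letter := (l.1, ~~ l.2).
Definition winv (w : word) : word := rev (map inv_letter w).
Definition gen1 (v : T) : word := [:: (v, false)].

Inductive raag_eq : word -> word -> Prop :=
| req_refl w : raag_eq w w
| req_sym w1 w2 : raag_eq w1 w2 -> raag_eq w2 w1
| req_trans w1 w2 w3 : raag_eq w1 w2 -> raag_eq w2 w3 -> raag_eq w1 w3
| req_cancel u v (l : letter) : raag_eq (u ++ [:: l; inv_letter l] ++ v) (u ++ v)
| req_comm u v (l m : letter) : adj l.1 m.1 ->
    raag_eq (u ++ [:: l; m] ++ v) (u ++ [:: m; l] ++ v).

(* Endomorphisms of A_Gamma, given by images of the generators. *)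
Definition endo := T -> word.

Definition wsubst (f : endo) (w : word) : word :=
  flatten (map (fun l : letter => if l.2 then winv (f l.1) else f l.1) w).

(* f respects the defining relations, so it induces an endomorphism *)
Definition is_hom (f : endo) : Prop :=
  forall u v, adj u v -> raag_eq (f u ++ f v) (f v ++ f u).

(* equality as maps A_Gamma -> A_Gamma *)
Definition eqv (f g : endo) : Prop := forall v, raag_eq (f v) (g v).

Definition idm : endo := gen1.
(* functional composition: (ecomp f g) = f o g *)
Definition ecomp (f g : endo) : endo := fun v => wsubst f (g v).
Definition is_inv (f g : endo) : Prop := eqv (ecomp f g) idm /\ eqv (ecomp g f) idm.

Inductive gen_sub (S : endo -> Prop) : endo -> Prop :=
| gs_base f : S f -> gen_sub S f
| gs_id : gen_sub S idm
| gs_comp f g : gen_sub S f -> gen_sub S g -> gen_sub S (ecomp f g)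
| gs_inv f g : gen_sub S f -> is_hom g -> is_inv f g -> gen_sub S g
| gs_eqv f g : gen_sub S f -> eqv f g -> gen_sub S g.

Definition product_of (P : endo -> Prop) (f : endo) : Prop :=
  exists fs : seq endo, (forall i, i < size fs -> P (nth idm fs i)) /\ eqv f (foldr ecomp idm fs).

(* domination on vertices: v >= w iff lk(w) is contained in st(v) *)
Definition dom (v w : T) : bool := [forall t, adj w t ==> (adj v t || (t == v))].

(* The automorphism sending the letter l to l s and fixing all generators
   other than the underlying vertex of l.  If l = w^{-1}, this means
   w^{-1} |-> w^{-1} s, i.e. w |-> s^{-1} w. *)
Definition right_mult (l : letter) (s : word) : endo := fun t =>
  if t == l.1 then (if l.2 then winv s ++ gen1 t else gen1 t ++ s) else gen1 t.

(* transvection tau_{u,v} : v |-> v u *)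
Definition transv (u v : letter) : endo := right_mult v [:: u].

Definition commw (x y : letter) : word := [:: inv_letter x; inv_letter y; x; y].

Definition tau_comm (x y c : letter) : endo := right_mult c (commw x y).

Definition pconj (u : letter) (Y : {set T}) : endo := fun t =>
  if t \in Y then [:: inv_letter u; (t, false); u] else gen1 t.

Definition inner (w : word) : endo := fun t => winv w ++ gen1 t ++ w.

(* Y is a union of connected components of Gamma - st(v) *)
Definition pc_domain (v : T) (Y : {set T}) : Prop :=
  (forall y, y \in Y -> ~~ adj v y /\ y != v) /\
  (forall y t, y \in Y -> adj y t -> ~~ adj v t -> t != v -> t \in Y).

Definition K_gens (Z : {set T}) (f : endo) : Prop :=
  (exists x y c : letter,
      [/\ x.1 \in Z, y.1 \in Z, c.1 \in Z & [/\ x.1 != y.1, x.1 != c.1, y.1 != c.1,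
        dom x.1 c.1 & dom y.1 c.1]] /\ eqv f (tau_comm x y c))
  \/ (exists (x : letter) (c : T),
      [/\ x.1 \in Z, c \in Z, x.1 != c & dom x.1 c] /\ eqv f (pconj x [set c]))
  \/ (exists w : word, eqv f (inner w)).

Definition K_sub (Z : {set T}) : endo -> Prop := gen_sub (K_gens Z).
End RAAG.

(* Main.v *)
Require Import Defs.
From mathcomp Require Import all_boot.
Set Implicit Arguments. Unset Strict Implicit. Unset Printing Implicit Defensive.


Lemma req_catl (T : finType) (adj : rel T) u w1 w2 :
  raag_eq adj w1 w2 -> raag_eq adj (u ++ w1) (u ++ w2).
Proof.
elim=> [w|w1' w2' _ IH|w1' w2' w3' _ IH1 _ IH2|u' v l|u' v l m h].
- exact: req_refl.
- exact: req_sym.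
- exact: req_trans IH1 IH2.
- by move: (req_cancel adj (u ++ u') v l); rewrite -!catA.
- by move: (req_comm (u ++ u') v h); rewrite -!catA.
Qed.

Lemma req_catr (T : finType) (adj : rel T) v w1 w2 :
  raag_eq adj w1 w2 -> raag_eq adj (w1 ++ v) (w2 ++ v).
Proof.
elim=> [w|w1' w2' _ IH|w1' w2' w3' _ IH1 _ IH2|u' v' l|u' v' l m h].
- exact: req_refl.
- exact: req_sym.
- exact: req_trans IH1 IH2.
- by move: (req_cancel adj u' (v' ++ v) l); rewrite -!catA.
- by move: (req_comm u' (v' ++ v) h); rewrite -!catA.
Qed.

Lemma req_cat (T : finType) (adj : rel T) u1 u2 v1 v2 :
  raag_eq adj u1 u2 -> raag_eq adj v1 v2 -> raag_eq adj (u1 ++ v1) (u2 ++ v2).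
Proof. move=> h1 h2; apply: req_trans (req_catr _ h1) (req_catl _ h2). Qed.

Lemma rq_cons (T : finType) (adj : rel T) l w1 w2 :
  raag_eq adj w1 w2 -> raag_eq adj (l :: w1) (l :: w2).
Proof. exact: (req_catl [:: l]). Qed.

Lemma rq_canc (T : finType) (adj : rel T) (v : T) (b : bool) w :
  raag_eq adj ((v, b) :: (v, ~~ b) :: w) w.
Proof. exact: (req_cancel adj [::] w (v, b)). Qed.

Lemma rq_swap (T : finType) (adj : rel T) (l m : letter T) w :
  adj l.1 m.1 -> raag_eq adj (l :: m :: w) (m :: l :: w).
Proof. by move=> h; exact: (req_comm [::] w h). Qed.

Ltac at_pos n tac := lazymatch n with 0 => tac | S ?m => apply rq_cons; at_pos m tac end.
Ltac Lc n := eapply req_trans; [at_pos n ltac:(apply rq_canc) | ].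
Ltac solve_adj := rewrite /=; first [assumption | match goal with H : symmetric _ |- _ => rewrite H; assumption end | done | idtac].
Ltac Ls n := eapply req_trans; [at_pos n ltac:(apply rq_swap; solve_adj) | ].
Ltac fin := apply req_refl.
Ltac flip := apply req_sym.



Lemma inv_letterK (T : finType) : involutive (@inv_letter T).
Proof. by case=> v b; rewrite /inv_letter /= negbK. Qed.

Lemma winv_cat (T : finType) (u v : word T) : winv (u ++ v) = winv v ++ winv u.
Proof. by rewrite /winv map_cat rev_cat. Qed.

Lemma winvK (T : finType) (w : word T) : winv (winv w) = w.
Proof. by rewrite /winv map_rev revK (mapK (@inv_letterK T)). Qed.

Lemma wsubst_cat (T : finType) (f : endo T) u v : wsubst f (u ++ v) = wsubst f u ++ wsubst f v.
Proof. by rewrite /wsubst map_cat flatten_cat. Qed.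

Lemma wsubst_cons (T : finType) (f : endo T) l u :
  wsubst f (l :: u) = (if l.2 then winv (f l.1) else f l.1) ++ wsubst f u.
Proof. by []. Qed.

Lemma wsubst_nil (T : finType) (f : endo T) : wsubst f [::] = [::].
Proof. by []. Qed.

Lemma winv_cons (T : finType) (l : letter T) w : winv (l :: w) = winv w ++ [:: inv_letter l].
Proof. by rewrite /winv /= rev_cons cats1. Qed.

Lemma wsubst_winv (T : finType) (f : endo T) w : wsubst f (winv w) = winv (wsubst f w).
Proof.
elim: w => [|[v b] w IH] //.
rewrite winv_cons wsubst_cat IH wsubst_cons winv_cat /= cats0.
by case: b => //=; rewrite winvK.
Qed.

Lemma wsubst_ecomp (T : finType) (f g : endo T) w :
  wsubst (ecomp f g) w = wsubst f (wsubst g w).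
Proof.
elim: w => [|[v b] w IH] //.
by rewrite !wsubst_cons wsubst_cat IH /ecomp; case: b => //=; rewrite wsubst_winv.
Qed.

Lemma wsubst_gen1 (T : finType) (f : endo T) t : wsubst f (gen1 t) = f t.
Proof. by rewrite /gen1 wsubst_cons /= cats0. Qed.

Lemma req_winv (T : finType) (adj : rel T) (adj_sym : symmetric adj) w1 w2 :
  raag_eq adj w1 w2 -> raag_eq adj (winv w1) (winv w2).
Proof.
elim=> [w|w1' w2' _ IH|w1' w2' w3' _ IH1 _ IH2|u v l|u v l m h].
- exact: req_refl.
- exact: req_sym.
- exact: req_trans IH1 IH2.
- rewrite !winv_cat -catA; apply: req_catl.
  case: l => x b; rewrite /winv /inv_letter /= negbK; exact: rq_canc.
- rewrite !winv_cat; apply: req_catr; apply: req_catl.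
  rewrite /winv /=; apply: rq_swap; by rewrite /= adj_sym.
Qed.

Lemma req_wwinv (T : finType) (adj : rel T) (w : word T) :
  raag_eq adj (w ++ winv w) [::].
Proof.
elim/last_ind: w => [|w l IH]; first exact: req_refl.
rewrite -cats1 winv_cat -catA.
apply: req_trans _ IH; apply: req_catl.
rewrite /winv /= /inv_letter. case: l => x b /=. exact: rq_canc.
Qed.

Lemma req_winvw (T : finType) (adj : rel T) (w : word T) :
  raag_eq adj (winv w ++ w) [::].
Proof. by have := req_wwinv adj (winv w); rewrite winvK. Qed.

Definition cm (T : finType) (adj : rel T) (A B : word T) := raag_eq adj (A ++ B) (B ++ A).

Lemma cm_sym (T : finType) (adj : rel T) A B : cm adj A B -> cm adj B A.
Proof. exact: req_sym. Qed.

Lemma req_cancel_mid (T : finType) (adj : rel T) u w v :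
  raag_eq adj (u ++ (w ++ winv w) ++ v) (u ++ v).
Proof. apply: req_catl; exact: (req_catr _ (req_wwinv _ _)). Qed.

Lemma cm_inv (T : finType) (adj : rel T) A B : cm adj A B -> cm adj (winv A) B.
Proof.
rewrite /cm => h.
have s1 : raag_eq adj (winv A ++ B) (winv A ++ (B ++ (A ++ winv A))).
  apply: req_catl; apply: req_sym.
  by have := req_catl B (req_wwinv adj A); rewrite cats0.
apply: req_trans s1 _.
have s2 : raag_eq adj (winv A ++ ((B ++ A) ++ winv A)) (winv A ++ ((A ++ B) ++ winv A)).
  by apply: req_catl; apply: req_catr; apply: req_sym.
rewrite -[(B ++ A) ++ _]catA in s2; apply: req_trans s2 _.
have := req_catr (B ++ winv A) (req_winvw adj A).
by rewrite -!catA /=.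
Qed.

Lemma wsubst_req (T : finType) (adj : rel T) (adj_sym : symmetric adj) f w1 w2 :
  is_hom adj f -> raag_eq adj w1 w2 -> raag_eq adj (wsubst f w1) (wsubst f w2).
Proof.
move=> hf; elim=> [w|w1' w2' _ IH|w1' w2' w3' _ IH1 _ IH2|u v l|u v l m h].
- exact: req_refl.
- exact: req_sym.
- exact: req_trans IH1 IH2.
- rewrite !wsubst_cat; apply: req_catl.
  rewrite !wsubst_cons /= catA; case: l => x [] /=.
  + rewrite wsubst_nil cats0; exact: (req_catr _ (req_winvw adj (f x))).
  + rewrite wsubst_nil cats0; exact: (req_catr _ (req_wwinv adj (f x))).
- rewrite !wsubst_cat; apply: req_catl.
  rewrite !wsubst_cons /= wsubst_nil !cats0; apply: req_catr.
  have H : cm adj (f l.1) (f m.1) by exact: hf.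
  case: l m h H => x [] [y []] /= h H.
  + exact: (cm_inv (cm_sym (cm_inv (cm_sym H)))).
  + exact: (cm_inv H).
  + exact: (cm_sym (cm_inv (cm_sym H))).
  + exact: H.
Qed.

Lemma wsubst_eqv (T : finType) (adj : rel T) (adj_sym : symmetric adj) f g w :
  eqv adj f g -> raag_eq adj (wsubst f w) (wsubst g w).
Proof.
move=> h; elim: w => [|[v b] w IH]; first exact: req_refl.
rewrite !wsubst_cons; apply: req_cat => //; case: b => /=; last exact: h.
exact: req_winv.
Qed.

Lemma eqv_refl (T : finType) (adj : rel T) f : eqv adj f f.
Proof. by move=> v; apply: req_refl. Qed.
Lemma eqv_sym (T : finType) (adj : rel T) f g : eqv adj f g -> eqv adj g f.
Proof. by move=> h v; apply: req_sym. Qed.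
Lemma eqv_trans (T : finType) (adj : rel T) f g h : eqv adj f g -> eqv adj g h -> eqv adj f h.
Proof. by move=> h1 h2 v; apply: req_trans (h1 v) (h2 v). Qed.

Lemma hom_ecomp (T : finType) (adj : rel T) (adj_sym : symmetric adj) f g :
  is_hom adj f -> is_hom adj g -> is_hom adj (ecomp f g).
Proof.
move=> hf hg u v h; rewrite /ecomp -!wsubst_cat; apply: wsubst_req => //; exact: hg.
Qed.

Lemma transfer (T : finType) (adj : rel T) (adj_sym : symmetric adj) tau tau_inv p g :
  is_hom adj g -> is_inv adj tau tau_inv ->
  eqv adj (ecomp tau p) (ecomp g tau) ->
  eqv adj (ecomp (ecomp tau p) tau_inv) g.
Proof.
move=> hg [h1 _] h t; rewrite /ecomp.
apply: req_trans (wsubst_eqv _ _ h) _ => //.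
rewrite -/(ecomp g tau) wsubst_ecomp.
apply: req_trans (wsubst_req adj_sym hg (h1 t)) _.
rewrite /idm wsubst_gen1; exact: req_refl.
Qed.



Lemma rq_swap' (T : finType) (adj : rel T) (l m : letter T) w :
  adj l.1 m.1 || (l.1 == m.1) -> raag_eq adj (l :: m :: w) (m :: l :: w).
Proof.
case/orP; first exact: rq_swap.
case: l m => x b [y b'] /= /eqP <-.
case: (b =P b') => [<-|/eqP]; first exact: req_refl.
move=> hb; have -> : b' = ~~ b by case: b b' hb => [] [].
apply: req_trans (rq_canc _ _ _ _) _.
apply: req_sym; have := rq_canc adj x (~~ b) w; by rewrite negbK.
Qed.

Lemma cm_letter (T : finType) (adj : rel T) (l : letter T) w :
  (forall m, m \in w -> adj l.1 m.1 || (l.1 == m.1)) -> cm adj [:: l] w.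
Proof.
rewrite /cm; elim: w => [|m w IH] H /=; first exact: req_refl.
apply: req_trans (rq_swap' _ _) _; first by apply: H; rewrite inE eqxx.
apply: rq_cons; apply: IH => m' hm'; apply: H; by rewrite inE hm' orbT.
Qed.

Lemma hom_pconj_mixed (T : finType) (adj : rel T) (adj_sym : symmetric adj) (z u v : T) :
  adj u v -> adj z v || (v == z) ->
  raag_eq adj [:: (z,true); (u,false); (z,false); (v,false)]
              [:: (v,false); (z,true); (u,false); (z,false)].
Proof.
move=> huv /orP[hzv|/eqP hv]; last subst v.
- Ls 2. Ls 1. Ls 0. fin.
- flip. Lc 0. flip. Ls 0. Lc 1. fin.
Qed.

Lemma hom_pconj (T : finType) (adj : rel T) (adj_sym : symmetric adj) (z : T) (Y : {set T}) :
  (forall s t, s \in Y -> t \notin Y -> adj s t -> adj z t || (t == z)) ->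
  is_hom adj (pconj (z,false) Y).
Proof.
move=> H u v huv; rewrite /pconj /gen1.
case: (boolP (u \in Y)) => hu; case: (boolP (v \in Y)) => hv /=.
- Lc 2. flip. Lc 2. Ls 1. fin.
- exact: (hom_pconj_mixed adj_sym huv (H _ _ hu hv huv)).
- have hvu : adj v u by rewrite adj_sym.
  flip; exact: (hom_pconj_mixed adj_sym hvu (H _ _ hv hu hvu)).
- by apply: rq_swap.
Qed.

Lemma hom_rm (T : finType) (adj : rel T) (adj_sym : symmetric adj) (adj_irr : irreflexive adj)
  (v : T) (s : word T) :
  (forall t m, adj v t -> m \in s -> adj m.1 t || (t == m.1)) ->
  is_hom adj (right_mult (v,false) s).
Proof.
have key : forall u w, adj u w -> (forall m, m \in s -> adj m.1 w || (w == m.1)) ->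
    raag_eq adj ((u,false) :: s ++ [:: (w,false)]) ((w,false) :: (u,false) :: s).
  move=> u w huw H.
  apply: req_trans (_ : raag_eq adj ((u,false) :: (w,false) :: s) _).
    apply: rq_cons; apply: req_sym; apply: cm_letter => m hm.
    by rewrite /= [adj w _]adj_sym; apply: H.
  by apply: rq_swap.
move=> H u w huw; rewrite /right_mult /gen1 /=.
case: (u =P v) => [eu|nu]; case: (w =P v) => [ew|nw] /=.
- by move: huw; rewrite eu ew adj_irr.
- apply: key => // m hm; apply: H => //; by rewrite -eu.
- apply: req_sym; apply: key; first by rewrite adj_sym.
  move=> m hm; apply: H => //; by rewrite -ew adj_sym.
- by apply: rq_swap.
Qed.

Lemma hom_inner (T : finType) (adj : rel T) (adj_sym : symmetric adj) (w : word T) :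
  is_hom adj (inner w).
Proof.
move=> u v huv; rewrite /inner /gen1.
have e : forall x y : T, (winv w ++ [:: (x,false)] ++ w) ++ winv w ++ [:: (y,false)] ++ w
   = winv w ++ (x,false) :: (w ++ winv w) ++ (y,false) :: w by move=> x y; rewrite -!catA.
rewrite !e; apply: req_catl.
apply: req_trans (_ : raag_eq adj [:: (u,false), (v,false) & w] _).
  apply: rq_cons; exact: (req_catr _ (req_wwinv _ _)).
apply: req_trans; first by apply: rq_swap; exact: huv.
apply: req_sym; apply: rq_cons; exact: (req_catr _ (req_wwinv _ _)).
Qed.

Lemma wsubst_inner (T : finType) (adj : rel T) (w u : word T) :
  raag_eq adj (wsubst (inner w) u) (winv w ++ u ++ w).
Proof.
elim: u => [|[x b] u IH] /=.
  by rewrite wsubst_nil; apply: req_sym; apply: req_winvw.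
rewrite wsubst_cons /=.
have -> : (if b then winv (inner w x) else inner w x) = winv w ++ (x,b) :: w.
  rewrite /inner /gen1; case: b => //=.
  by rewrite winv_cat winvK winv_cons -catA.
rewrite -catA /=; apply: req_catl; apply: rq_cons.
apply: req_trans (req_catl _ IH) _.
rewrite catA; exact: (req_catr _ (req_wwinv _ _)).
Qed.


Ltac ev := rewrite /wsubst /winv /inv_letter /=.

Lemma core1 (T : finType) (adj : rel T) (adj_sym : symmetric adj) (a b x : T) (Y : {set T}) :
  a != b -> x != b -> ((b \in Y) == (a \in Y)) || adj x a || ((x == a) && (a \notin Y)) ->
  eqv adj (ecomp (transv (a,false) (b,false)) (pconj (x,false) Y))
          (ecomp (pconj (x,false) Y) (transv (a,false) (b,false))).
Proof.
move=> /negbTE hab /negbTE hxb hc t; rewrite /ecomp /transv /right_mult /pconj /gen1 /=.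
case: (t =P b) => [->|/eqP/negbTE htb].
- case hbY: (b \in Y); case haY: (a \in Y); do 3! (ev; rewrite ?eqxx ?hab ?hxb ?hbY ?haY /=).
  + flip. Lc 2. fin.
  + move: hc; rewrite hbY haY /= => /orP[hxa|/andP[/eqP exa _]].
    * Ls 2. fin.
    * subst x. fin.
  + move: hc; rewrite hbY haY /= andbF orbF => hxa.
    flip. Ls 1. Lc 2. fin.
  + fin.
- case htY: (t \in Y); do 3! (ev; rewrite ?htb ?hxb ?htY /=); fin.
Qed.

Lemma core2 (T : finType) (adj : rel T) (adj_sym : symmetric adj) (a b x : T) (Y : {set T}) :
  a != b -> x != b -> b \in Y -> a \notin Y -> x \notin Y ->
  eqv adj (ecomp (transv (a,false) (b,false)) (pconj (x,false) Y))
          (ecomp (ecomp (pconj (x,false) Y) (tau_comm (x,false) (a,true) (b,false)))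
                 (transv (a,false) (b,false))).
Proof.
move=> /negbTE hab /negbTE hxb hbY /negbTE haY /negbTE hxY t.
rewrite /ecomp -/(ecomp (pconj (x,false) Y) (tau_comm (x,false) (a,true) (b,false))) wsubst_ecomp.
rewrite /transv /tau_comm /commw /right_mult /pconj /gen1 /=.
case: (t =P b) => [->|/eqP/negbTE htb].
- do 3! (ev; rewrite ?eqxx ?hab ?hxb ?hbY ?haY ?hxY /=).
  flip. Lc 2. Lc 4. fin.
- case htY: (t \in Y); do 3! (ev; rewrite ?htb ?hxb ?htY /=); fin.
Qed.

Lemma core3 (T : finType) (adj : rel T) (adj_sym : symmetric adj) (a b x : T) (Y : {set T}) :
  a != b -> x != b -> b \notin Y -> a \in Y -> x \notin Y ->
  eqv adj (ecomp (transv (a,false) (b,false)) (pconj (x,false) Y))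
          (ecomp (ecomp (tau_comm (a,true) (x,false) (b,false)) (pconj (x,false) Y))
                 (transv (a,false) (b,false))).
Proof.
move=> /negbTE hab /negbTE hxb /negbTE hbY haY /negbTE hxY t.
rewrite /ecomp -/(ecomp (tau_comm (a,true) (x,false) (b,false)) (pconj (x,false) Y)) wsubst_ecomp.
rewrite /transv /tau_comm /commw /right_mult /pconj /gen1 /=.
case: (t =P b) => [->|/eqP/negbTE htb].
- do 3! (ev; rewrite ?eqxx ?hab ?hxb ?hbY ?haY ?hxY /=).
  flip. Lc 4. Lc 3. Lc 2. fin.
- case htY: (t \in Y); do 3! (ev; rewrite ?htb ?hxb ?htY /=); fin.
Qed.

Lemma core4 (T : finType) (adj : rel T) (adj_sym : symmetric adj) (a b : T) (Y Y1 : {set T}) :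
  a != b -> b \notin Y -> a \notin Y ->
  (forall t, t \in Y1 -> t \in Y) ->
  (forall t, t \in Y -> t \notin Y1 -> adj a t && adj a b) ->
  eqv adj (ecomp (transv (a,false) (b,false)) (pconj (b,false) Y))
          (ecomp (ecomp (pconj (b,false) Y) (pconj (a,false) Y1))
                 (transv (a,false) (b,false))).
Proof.
move=> /negbTE hab /negbTE hbY /negbTE haY H1 H2 t.
have hbY1 : (b \in Y1) = false by apply/negP => /H1; rewrite hbY.
have haY1 : (a \in Y1) = false by apply/negP => /H1; rewrite haY.
rewrite /ecomp -/(ecomp (pconj (b,false) Y) (pconj (a,false) Y1)) wsubst_ecomp.
rewrite /transv /right_mult /pconj /gen1 /=.
case: (t =P b) => [->|/eqP/negbTE htb].
- do 3! (ev; rewrite ?eqxx ?hab ?hbY ?haY ?hbY1 ?haY1 /=). fin.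
- case htY: (t \in Y); case htY1: (t \in Y1); do 3! (ev; rewrite ?eqxx ?hab ?htb ?htY ?htY1 ?haY ?hbY /=).
  + fin.
  + have /andP[hat habj] := H2 t htY (negbT htY1).
    Ls 0. Ls 1. Ls 2. Lc 3. fin.
  + by move: (H1 t htY1); rewrite htY.
  + fin.
Qed.

Lemma core5 (T : finType) (adj : rel T) (adj_sym : symmetric adj) (a b : T) (Y Y2 : {set T}) :
  a != b -> b \notin Y -> a \in Y -> b \in Y2 -> a \notin Y2 ->
  (forall t, t != b -> t \in Y2 -> t \in Y) ->
  (forall t, t \in Y -> t \notin Y2 -> adj a t || (t == a)) ->
  eqv adj (ecomp (transv (a,false) (b,false)) (pconj (b,false) Y))
          (ecomp (ecomp (pconj (a,false) Y2) (pconj (b,false) Y))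
                 (transv (a,false) (b,false))).
Proof.
move=> /negbTE hab /negbTE hbY haY hbY2 /negbTE haY2 H1 H2 t.
rewrite /ecomp -/(ecomp (pconj (a,false) Y2) (pconj (b,false) Y)) wsubst_ecomp.
rewrite /transv /right_mult /pconj /gen1 /=.
case: (t =P b) => [->|/eqP/negbTE htb].
- do 3! (ev; rewrite ?eqxx ?hab ?hbY ?haY ?hbY2 ?haY2 /=).
  flip. Lc 2. Lc 1. Lc 0. Lc 0. fin.
- case htY: (t \in Y); case htY2: (t \in Y2); do 3! (ev; rewrite ?eqxx ?hab ?htb ?htY ?htY2 ?haY ?hbY ?hbY2 ?haY2 /=).
  + flip. Lc 2. Lc 3. fin.
  + case/orP: (H2 t htY (negbT htY2)) => [hat|/eqP eta].
    * flip. Ls 2. Lc 3. fin.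
    * subst t. flip. Lc 3. fin.
  + by move: (H1 t (negbT htb) htY2); rewrite htY.
  + fin.
Qed.


Lemma domP (T : finType) (adj : rel T) v w t : dom adj v w -> adj w t -> adj v t || (t == v).
Proof. by move/forallP => /(_ t) /implyP. Qed.

Lemma domI (T : finType) (adj : rel T) v w :
  (forall t, adj w t -> adj v t || (t == v)) -> dom adj v w.
Proof. by move=> H; apply/forallP => t; apply/implyP; apply: H. Qed.

Lemma dom_trans (T : finType) (adj : rel T) (adj_sym : symmetric adj) v w u :
  dom adj v w -> dom adj w u -> dom adj v u.
Proof.
move=> hvw hwu; apply: domI => t hut.
case/orP: (domP hwu hut) => [hwt|/eqP etw]; first exact: domP hvw hwt.
subst t.
have hwu' : adj w u by rewrite adj_sym.
case/orP: (domP hvw hwu') => [hvu|/eqP euv].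
- have huv : adj u v by rewrite adj_sym.
  case/orP: (domP hwu huv) => [hwv|/eqP evw].
  + by rewrite adj_sym hwv.
  + by rewrite evw eqxx orbT.
- by subst u; rewrite hut.
Qed.

Lemma domxb_L2 (T : finType) (adj : rel T) (adj_sym : symmetric adj) (a b x : T) Y :
  pc_domain adj x Y -> dom adj a b -> b \in Y -> a \notin Y -> ~~ adj a x -> a != x ->
  dom adj x b.
Proof.
move=> [D1 D2] hab hbY haY nax anx; apply: domI => t hbt.
apply/negPn/negP; rewrite negb_or => /andP[nxt ntx].
have htY : t \in Y by apply: D2 hbY hbt nxt ntx.
case/orP: (domP hab hbt) => [hat|/eqP eta].
- have hta : adj t a by rewrite adj_sym.
  have nxa : ~~ adj x a by rewrite adj_sym.
  have := D2 t a htY hta nxa anx.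
  by rewrite (negbTE haY).
- by subst t; rewrite htY in haY.
Qed.

Lemma domxb_L3 (T : finType) (adj : rel T) (adj_sym : symmetric adj) (a b x : T) Y :
  pc_domain adj x Y -> dom adj a b -> b \notin Y -> a \in Y -> ~~ adj a x -> b != x ->
  dom adj x b.
Proof.
move=> [D1 D2] hab hbY haY nax bnx.
have nxb : ~~ adj x b.
  apply/negP => hxb; have hbx : adj b x by rewrite adj_sym.
  case/orP: (domP hab hbx) => [hax|/eqP exa].
  - by rewrite hax in nax.
  - by subst x; case: (D1 _ haY); rewrite eqxx.
apply: domI => t hbt.
apply/negPn/negP; rewrite negb_or => /andP[nxt ntx].
case/orP: (domP hab hbt) => [hat|/eqP eta].
- have htY : t \in Y by apply: D2 haY hat nxt ntx.
  have htb : adj t b by rewrite adj_sym.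
  have := D2 t b htY htb nxb bnx.
  by rewrite (negbTE hbY).
- subst t; have hab' : adj a b by rewrite adj_sym.
  have := D2 a b haY hab' nxb bnx.
  by rewrite (negbTE hbY).
Qed.

Lemma prod1 (T : finType) (adj : rel T) (P : endo T -> Prop) f g :
  P g -> eqv adj f g -> product_of adj P f.
Proof.
move=> hg hf; exists [:: g]; split; first by case.
move=> t; apply: req_trans (hf t) _; rewrite /= /ecomp /idm wsubst_gen1; exact: req_refl.
Qed.

Lemma prod2 (T : finType) (adj : rel T) (P : endo T -> Prop) f g1 g2 :
  P g1 -> P g2 -> eqv adj f (ecomp g1 g2) -> product_of adj P f.
Proof.
move=> hg1 hg2 hf; exists [:: g1; g2]; split; first by case=> [|[]].
move=> t; apply: req_trans (hf t) _; rewrite /= /ecomp /idm wsubst_gen1; exact: req_refl.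
Qed.

Lemma K_of (T : finType) (adj : rel T) Z f g : K_sub adj Z g -> eqv adj g f -> K_sub adj Z f.
Proof. exact: gs_eqv. Qed.

Lemma Kpc (T : finType) (adj : rel T) (Z : {set T}) (x c : T) :
  x \in Z -> c \in Z -> x != c -> dom adj x c -> K_sub adj Z (pconj (x,false) [set c]).
Proof.
move=> hx hc hxc hd; apply: gs_base; right; left.
exists (x,false), c; split; [by split | exact: eqv_refl].
Qed.

Lemma Ktc (T : finType) (adj : rel T) (Z : {set T}) (x y c : letter T) :
  x.1 \in Z -> y.1 \in Z -> c.1 \in Z -> x.1 != y.1 -> x.1 != c.1 -> y.1 != c.1 ->
  dom adj x.1 c.1 -> dom adj y.1 c.1 -> K_sub adj Z (tau_comm x y c).
Proof.
move=> *; apply: gs_base; left; exists x, y, c; split; [by split | exact: eqv_refl].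
Qed.

Lemma hom_tc (T : finType) (adj : rel T) (adj_sym : symmetric adj) (adj_irr : irreflexive adj)
  (x y : letter T) (c : T) :
  dom adj x.1 c -> dom adj y.1 c -> is_hom adj (tau_comm x y (c,false)).
Proof.
move=> hx hy; apply: hom_rm => // t m hct.
case: x y hx hy => [x bx] [y b'] /= hx hy.
rewrite /commw !inE => /or4P[] /eqP -> /=; by [apply: domP hx hct | apply: domP hy hct].
Qed.

Lemma hom_tau (T : finType) (adj : rel T) (adj_sym : symmetric adj) (adj_irr : irreflexive adj)
  (a b : T) : dom adj a b -> is_hom adj (transv (a,false) (b,false)).
Proof.
move=> h; apply: hom_rm => // t m hbt; rewrite inE => /eqP -> /=; exact: domP h hbt.
Qed.

Lemma hom_pc_dom (T : finType) (adj : rel T) (adj_sym : symmetric adj) (z : T) Y :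
  pc_domain adj z Y -> is_hom adj (pconj (z,false) Y).
Proof.
move=> [D1 D2]; apply: hom_pconj => // s t hs ht hst.
apply/negPn/negP; rewrite negb_or => /andP[h1 h2].
by rewrite (D2 s t hs hst h1 h2) in ht.
Qed.

Lemma hom_pc1 (T : finType) (adj : rel T) (adj_sym : symmetric adj) (z c : T) :
  dom adj z c -> is_hom adj (pconj (z,false) [set c]).
Proof.
move=> h; apply: hom_pconj => // s t; rewrite inE => /eqP -> _; exact: domP.
Qed.


Lemma part3 (T : finType) (adj : rel T) (adj_sym : symmetric adj) (a b x : T) (Z : {set T})
  (tau_inv : endo T) :
  is_inv adj (transv (a,false) (b,false)) tau_inv ->
  K_sub adj Z (ecomp (ecomp (transv (a,false) (b,false)) (inner (gen1 x))) tau_inv).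
Proof.
move=> hinv.
apply: (K_of (g := inner (transv (a,false) (b,false) x))).
  by apply: gs_base; right; right; exists (transv (a,false) (b,false) x); exact: eqv_refl.
apply: eqv_sym; apply: transfer => //; first exact: hom_inner.
move=> t; rewrite /ecomp /inner !wsubst_cat wsubst_winv !wsubst_gen1.
flip; exact: wsubst_inner.
Qed.

Lemma part2 (T : finType) (adj : rel T) (adj_sym : symmetric adj) (adj_irr : irreflexive adj)
  (a b x : T) (hab : dom adj a b) (hab' : a != b) (tau_inv : endo T) (Y : {set T}) :
  is_inv adj (transv (a,false) (b,false)) tau_inv ->
  pc_domain adj x Y ->
     product_of adj
       (fun g => K_sub adj [set a; b; x] g \/
          exists (z : T) (Y' : {set T}),
            [/\ z \in [set a; x], pc_domain adj z Y',
                Y' \subset Y :|: [set x; a] & eqv adj g (pconj (z, false) Y')])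
       (ecomp (ecomp (transv (a,false) (b,false)) (pconj (x,false) Y)) tau_inv).
Proof.
move=> hinv hY; have [D1 D2] := hY.
have hxY : x \notin Y by apply/negP => /D1 [_]; rewrite eqxx.
have hp : is_hom adj (pconj (x,false) Y) by exact: hom_pc_dom.
have Pp : exists (z : T) (Y' : {set T}),
    [/\ z \in [set a; x], pc_domain adj z Y',
        Y' \subset Y :|: [set x; a] & eqv adj (pconj (x,false) Y) (pconj (z, false) Y')].
  exists x, Y; split => //; first by rewrite !inE eqxx orbT.
  - by apply/subsetP => y hy; rewrite inE hy.
  - exact: eqv_refl.
case: (x =P b) => [exb|/eqP nxb].
  subst x.
  case haY: (a \in Y).
  -
    set Y2 := [set y in Y | ~~ adj a y & y != a] :|: [set b].
    have nab : ~~ adj a b.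
      by apply/negP => h; case: (D1 _ haY); rewrite adj_sym h.
    have hY2 : pc_domain adj a Y2.
      split.
      + move=> y; rewrite !inE => /orP[/andP[_ /andP[-> ->]] // | /eqP ->].
        by rewrite nab eq_sym hab'.
      + move=> y t; rewrite !inE => /orP[/andP[hy /andP[nay ya]] | /eqP ->] hyt nat ta.
        * case: (t =P b) => [_|/eqP ntb]; first by rewrite orbT.
          have nbt : ~~ adj b t.
            by apply/negP => hbt; case/orP: (domP hab hbt) => [h|h]; [rewrite h in nat | rewrite h in ta].
          by rewrite (D2 y t hy hyt nbt ntb) nat ta.
        * by case/orP: (domP hab hyt) => [h|h]; [rewrite h in nat | rewrite h in ta].
    have hg : is_hom adj (ecomp (pconj (a,false) Y2) (pconj (b,false) Y)).
      by apply: hom_ecomp => //; apply: hom_pc_dom.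
    apply: (prod2 (g1 := pconj (a,false) Y2) (g2 := pconj (b,false) Y)).
    + right; exists a, Y2; split => //; first by rewrite !inE eqxx.
      * apply/subsetP => y; rewrite !inE => /orP[/andP[-> _] // | ->].
        by rewrite orbT.
      * exact: eqv_refl.
    + by right.
    apply: transfer => //; apply: core5 => //.
    + by rewrite !inE eqxx orbT.
    + by rewrite !inE eqxx !andbF /=.
    + by move=> t ntb; rewrite !inE (negbTE ntb) orbF => /andP[].
    + move=> t htY; rewrite !inE htY /= negb_or (negbTE (_ : t != b)).
      * by rewrite andbT negb_and negbK => /orP[->|/negPn ->]; rewrite ?orbT.
      * by apply/eqP => etb; subst t; rewrite htY in hxY.
  -
    set Y1 := [set y in Y | ~~ adj a y].
    have hY1 : pc_domain adj a Y1.
      split.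
      + move=> y; rewrite !inE => /andP[hy ->]; split => //.
        by apply/eqP => eya; subst y; rewrite hy in haY.
      + move=> y t; rewrite !inE => /andP[hy nay] hyt nat ta.
        have nbt : ~~ adj b t.
          by apply/negP => hbt; case/orP: (domP hab hbt) => [h|h]; [rewrite h in nat | rewrite h in ta].
        have ntb : t != b.
          by apply/eqP => etb; subst t; case: (D1 _ hy); rewrite adj_sym hyt.
        by rewrite nat andbT (D2 y t hy hyt nbt ntb).
    have hg : is_hom adj (ecomp (pconj (b,false) Y) (pconj (a,false) Y1)).
      by apply: hom_ecomp => //; apply: hom_pc_dom.
    apply: (prod2 (g1 := pconj (b,false) Y) (g2 := pconj (a,false) Y1)).
    + by right.
    + right; exists a, Y1; split => //; first by rewrite !inE eqxx.
      * by apply/subsetP => y; rewrite !inE => /andP[-> _].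
      * exact: eqv_refl.
    apply: transfer => //; apply: core4 => //.
    + by rewrite haY.
    + by move=> t; rewrite inE => /andP[].
    + move=> t htY; rewrite inE htY /= negbK => hat; rewrite hat /=.
      apply/negPn/negP => nba.
      have hta : adj t a by rewrite adj_sym.
      have nba' : ~~ adj b a by rewrite adj_sym.
      by rewrite (D2 t a htY hta nba' hab') in haY.
case: (x =P a) => [exa|/eqP nxa].
  subst x.
  apply: (prod1 (g := pconj (a,false) Y)); first by right.
  apply: transfer => //; apply: core1 => //.
  by rewrite eqxx hxY !orbT.
case hc: (((b \in Y) == (a \in Y)) || adj x a).
  apply: (prod1 (g := pconj (x,false) Y)); first by right.
  apply: transfer => //; apply: core1 => //; by rewrite hc.
move: hc; case hbY: (b \in Y); case haY: (a \in Y) => //= /negbT nxa'.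
-
  have nax : ~~ adj a x by rewrite adj_sym.
  have hxb : dom adj x b.
    by apply: (domxb_L2 adj_sym hY hab) => //; rewrite ?haY // eq_sym.
  have htc : is_hom adj (tau_comm (x,false) (a,true) (b,false)) by exact: hom_tc.
  apply: (prod2 (g1 := pconj (x,false) Y) (g2 := tau_comm (x,false) (a,true) (b,false))).
  + by right.
  + left; apply: Ktc => /=; rewrite ?inE ?eqxx ?orbT //.
  apply: transfer => //; first exact: hom_ecomp.
  by apply: core2 => //; rewrite haY.
-
  have nax : ~~ adj a x by rewrite adj_sym.
  have hxb : dom adj x b.
    by apply: (domxb_L3 adj_sym hY hab) => //; rewrite ?hbY // eq_sym.
  have htc : is_hom adj (tau_comm (a,true) (x,false) (b,false)) by exact: hom_tc.
  apply: (prod2 (g1 := tau_comm (a,true) (x,false) (b,false)) (g2 := pconj (x,false) Y)).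
  + left; apply: Ktc => /=; rewrite ?inE ?eqxx ?orbT //; by rewrite eq_sym.
  + by right.
  apply: transfer => //; first exact: hom_ecomp.
  by apply: core3 => //; rewrite hbY.
Qed.

Lemma part1 (T : finType) (adj : rel T) (adj_sym : symmetric adj) (adj_irr : irreflexive adj)
  (a b c x : T) (hab : dom adj a b) (hab' : a != b) (hxc : dom adj x c) (hxc' : x != c)
  (tau_inv : endo T) :
  is_inv adj (transv (a,false) (b,false)) tau_inv ->
  K_sub adj [set a; b; c; x]
    (ecomp (ecomp (transv (a,false) (b,false)) (pconj (x, false) [set c])) tau_inv).
Proof.
move=> hinv.
set Z := [set a; b; c; x].
have aZ : a \in Z by rewrite !inE eqxx.
have bZ : b \in Z by rewrite !inE eqxx !orbT.
have cZ : c \in Z by rewrite !inE eqxx !orbT.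
have xZ : x \in Z by rewrite !inE eqxx !orbT.
have hp : is_hom adj (pconj (x,false) [set c]) by exact: hom_pc1.
have Kp : K_sub adj Z (pconj (x,false) [set c]) by exact: Kpc.
case: (c =P b) => [ecb|/eqP ncb].
  subst c.
  case: (x =P a) => [exa|/eqP nxa].
    subst x; apply: (K_of Kp); apply: eqv_sym; apply: transfer => //.
    apply: core1 => //; by rewrite !inE !eqxx (negbTE hab') /= !orbT.
  have htc : is_hom adj (tau_comm (x,false) (a,true) (b,false)) by exact: hom_tc.
  have Kt : K_sub adj Z (tau_comm (x,false) (a,true) (b,false)).
    by apply: Ktc => //=; rewrite eq_sym.
  apply: (K_of (gs_comp Kp Kt)); apply: eqv_sym; apply: transfer => //.
    exact: hom_ecomp.
  apply: core2 => //; by rewrite !inE ?eqxx // eq_sym.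
case: (c =P a) => [eca|/eqP nca].
  subst c.
  case: (x =P b) => [exb|/eqP nxb].
    subst x.
    have Ka : K_sub adj Z (pconj (a,false) [set b]) by exact: Kpc.
    have ha : is_hom adj (pconj (a,false) [set b]) by exact: hom_pc1.
    apply: (K_of (gs_comp Ka Kp)); apply: eqv_sym; apply: transfer => //.
      exact: hom_ecomp.
    apply: core5 => //; rewrite ?inE ?eqxx //.
    all: try done.
    all: try by move=> t ntb; rewrite inE (negbTE ntb).
    all: try by move=> t; rewrite inE => /eqP ->; rewrite eqxx orbT.
  have hxb : dom adj x b by exact: dom_trans hxc hab.
  have htc : is_hom adj (tau_comm (a,true) (x,false) (b,false)) by exact: hom_tc.
  have Kt : K_sub adj Z (tau_comm (a,true) (x,false) (b,false)).
    by apply: Ktc => //=; rewrite eq_sym.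
  apply: (K_of (gs_comp Kt Kp)); apply: eqv_sym; apply: transfer => //.
    exact: hom_ecomp.
  apply: core3 => //; by rewrite !inE ?eqxx // eq_sym.
case: (x =P b) => [exb|/eqP nxb].
  subst x.
  set Y1 := [set y in [set c] | ~~ adj a y].
  have hab2 : adj a c -> adj a b.
    move=> hac; have hca : adj c a by rewrite adj_sym.
    case/orP: (domP hxc hca) => [h|h]; first by rewrite adj_sym.
    by rewrite h in hab'.
  have domac : ~~ adj a c -> dom adj a c.
    move=> nac; apply: domI => t hct.
    case/orP: (domP hxc hct) => [hbt|/eqP etb]; first exact: domP hab hbt.
    subst t; have hbc : adj b c by rewrite adj_sym.
    case/orP: (domP hab hbc) => [h|h]; first by rewrite h in nac.
    by rewrite h in nca.
  have [KY1 hY1] : K_sub adj Z (pconj (a,false) Y1) /\ is_hom adj (pconj (a,false) Y1).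
    case hac: (adj a c).
    - have e : eqv adj (@idm T) (pconj (a,false) Y1).
        move=> t; rewrite /pconj /Y1 !inE; case: (t =P c) => [->|_] /=; rewrite ?hac /=; exact: req_refl.
      split; first exact: (K_of (@gs_id _ _ _) e).
      apply: hom_pconj => // s t; rewrite /Y1 !inE => /andP[/eqP ->]; by rewrite hac.
    - have -> : Y1 = [set c].
        by apply/setP => y; rewrite /Y1 !inE; case: (y =P c) => // ->; rewrite hac.
      have dac := domac (negbT hac).
      split; [apply: Kpc => //; by rewrite eq_sym | exact: hom_pc1].
  apply: (K_of (gs_comp Kp KY1)); apply: eqv_sym; apply: transfer => //.
    exact: hom_ecomp.
  apply: core4 => //; rewrite ?inE 1?eq_sym //.
    + by move=> t; rewrite /Y1 !inE => /andP[].
  + move=> t; rewrite inE => /eqP ->; rewrite /Y1 !inE eqxx /= negbK => hac.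
    by rewrite hac hab2.
apply: (K_of Kp); apply: eqv_sym; apply: transfer => //.
apply: core1 => //. by rewrite !inE [b == c]eq_sym (negbTE ncb) [a == c]eq_sym (negbTE nca).
Qed.


Theorem mainTheorem3 (T : finType) (adj : rel T)
  (adj_sym : symmetric adj) (adj_irr : irreflexive adj)
  (a b c x : T)
  (hab : dom adj a b) (hab' : a != b) (hxc : dom adj x c) (hxc' : x != c) :
  let tau := transv (a, false) (b, false) in
  forall tau_inv : endo T, is_hom adj tau_inv -> is_inv adj tau tau_inv ->
  (* (1) *)
  K_sub adj [set a; b; c; x]
    (ecomp (ecomp tau (pconj (x, false) [set c])) tau_inv)
  /\
  (* (2) *)
  (forall Y : {set T}, pc_domain adj x Y ->
     product_of adj
       (fun g => K_sub adj [set a; b; x] g \/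
          exists (z : T) (Y' : {set T}),
            [/\ z \in [set a; x], pc_domain adj z Y',
                Y' \subset Y :|: [set x; a] & eqv adj g (pconj (z, false) Y')])
       (ecomp (ecomp tau (pconj (x, false) Y)) tau_inv))
  /\
  (* (3) *)
  K_sub adj [set a; b; x]
    (ecomp (ecomp tau (inner (gen1 x))) tau_inv).
Proof.
move=> tau tau_inv _ hinv; rewrite /tau; split; [|split].
- exact: part1.
- move=> Y hY; exact: part2.
- exact: part3.
Qed.
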